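(* Let $\boldsymbol V$ be a generically irreducible $(\boldsymbol{\mathfrak g}_d,K)$-module for $G(\mathbb R)=SL(2,\mathbb R)$. Then $H_{D_d}(\boldsymbol V)=0$ if and only if $\mathcal K(\boldsymbol V)=2\mathbb Z$ or $\mathcal K(\boldsymbol V)=2\mathbb Z+1$. Moreover, for $m\in\mathbb N$ (resp. $m\in\mathbb N_0$ in case 3), as $\boldsymbol{\mathfrak k}$-modules over $\mathbb C[t]$: (1) if $\mathcal K(\boldsymbol V)=\{m,m+2,m+4,\dots\}$ then $H_{D_d}(\boldsymbol V)\cong\mathbb C[t]\{v_m\otimes\tilde y\}$, whose only $\tilde h$-weight is $m-1$; (2) if $\mathcal K(\boldsymbol V)=\{-m,-m-2,\dots\}$ then $H_{D_d}(\boldsymbol V)\cong\mathbb C[t]\{v_{-m}\otimes1\}$, whose only weight is $-m+1$; (3) if $\mathcal K(\boldsymbol V)=\{-m,-m+2,\dots,m\}$ then $H_{D_d}(\boldsymbol V)\cong\mathbb C[t]\{v_m\otimes1,\ v_{-m}\otimes\tilde y\}$, whose only weights are $m+1$ and $-m-1$.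
   Context: $\mathfrak g=\mathfrak{sl}(2,\mathbb C)$, $K=SO(2,\mathbb C)$, with an $\mathfrak{sl}_2$-triple $x,y,h$ ($[x,y]=h$, $[h,x]=2x$, $[h,y]=-2y$) such that $\mathfrak k=\mathbb Ch$, $\mathfrak p=\mathbb Cx\oplus\mathbb Cy$. In $\mathbb C[t]\otimes\mathfrak g$ put $\tilde x=t\otimes x$, $\tilde y=t\otimes y$, $\tilde h=1\otimes h$; the deformation family is $\boldsymbol{\mathfrak g}_d=\boldsymbol{\mathfrak k}\oplus\boldsymbol{\mathfrak p}_d$, $\boldsymbol{\mathfrak k}=\mathbb C[t]\tilde h$, $\boldsymbol{\mathfrak p}_d=\mathbb C[t]\tilde x\oplus\mathbb C[t]\tilde y$, with $[\tilde h,\tilde x]=2\tilde x$, $[\tilde h,\tilde y]=-2\tilde y$, $[\tilde x,\tilde y]=t^2\tilde h$. The form $\boldsymbol\beta_d$ on $\boldsymbol{\mathfrak p}_d$ has $\boldsymbol\beta_d(\tilde x,\tilde x)=\boldsymbol\beta_d(\tilde y,\tilde y)=0$, $\boldsymbol\beta_d(\tilde x,\tilde y)=4$; $Cl(\boldsymbol{\mathfrak p}_d)$ its Clifford algebra ($XY+YX=\boldsymbol\beta_d(X,Y)$) with canonical map $\gamma_d$. Spin module $\boldsymbol S_d=\bigwedge(\mathbb C[t]\tilde y)=\mathbb C[t]1\oplus\mathbb C[t]\tilde y$ with $\gamma_d(\tilde x)1=0$, $\gamma_d(\tilde x)\tilde y=4$, $\gamma_d(\tilde y)1=\tilde y$,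 $\gamma_d(\tilde y)\tilde y=0$; $\tilde h$ acts on $\boldsymbol S_d$ by $\frac12\gamma_d(\tilde x)\gamma_d(\tilde y)-1$ (weights $1$ on $1$, $-1$ on $\tilde y$), and on $\boldsymbol V\otimes\boldsymbol S_d$ diagonally. Dirac operator $D_d=\frac14(\tilde x\otimes\gamma_d(\tilde y)+\tilde y\otimes\gamma_d(\tilde x))$ acting on $\boldsymbol V\otimes_{\mathbb C[t]}\boldsymbol S_d$; $H_{D_d}(\boldsymbol V)=\ker D_d/(\ker D_d\cap\mathrm{im}D_d)$. A generically irreducible $(\boldsymbol{\mathfrak g}_d,K)$-module (flat $\mathbb C[t]$-module with compatible actions, all but countably many fibers irreducible) decomposes as $\boldsymbol V=\bigoplus_{j\in\mathcal K(\boldsymbol V)}\boldsymbol V_j$, $\tilde h$ acting on $\boldsymbol V_j$ by $j$, each $\boldsymbol V_j$ free of rank one with generator $v_j$; $\mathcal K(\boldsymbol V)$ (the set of $K$-types, identified with $\tilde h$-weights) equals the $K$-type set of some irreducible $(\mathfrak{sl}(2,\mathbb C),K)$-module, i.e. one of $\{m,m+2,\dots\}$, $\{-m,-m-2,\dots\}$ ($m\ge1$), $\{-m,\dots,m\}$ ($m\ge0$), $2\mathbb Z$, $2\mathbb Z+1$. *)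

(* Defs.v *)
From HB Require Import structures.
From mathcomp Require Import all_boot all_order all_algebra.
From mathcomp Require Import complex.
From mathcomp Require Import boolp classical_sets cardinality reals.
Set Implicit Arguments. Unset Strict Implicit. Unset Printing Implicit Defensive.
Import Order.TTheory GRing.Theory Num.Theory.
Local Open Scope ring_scope.
Local Open Scope classical_set_scope.
Local Open Scope complex_scope.

(* The deformed module  V = (+)_{j in K} C[t] v_j.                    *)
(*  h~ v_j = j v_j ;  x~ v_j = xco j * v_{j+2} ;  y~ v_j = yco j * v_{j-2}. *)
(* (That x~ raises and y~ lowers the h~-weight by 2 is forced by      *)
(*  [h~,x~] = 2x~, [h~,y~] = -2y~.)  The relation [x~,y~] = t^2 h~ is  *)
(*  the field [bracket]; the support fields say x~ v_j = 0 when        *)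
(*  j+2 is not a K-type, etc.                                          *)
Record gdK_module (R : realType) := GdKModule {
  Kset : set int;
  xco : int -> {poly R[i]};
  yco : int -> {poly R[i]};
  xco_supp : forall j : int, xco j != 0 -> Kset j /\ Kset (j + 2);
  yco_supp : forall j : int, yco j != 0 -> Kset j /\ Kset (j - 2);
  bracket : forall j : int, Kset j ->
    xco (j - 2) * yco j - yco (j + 2) * xco j = 'X ^+ 2 * (j%:~R)%:P
}.

Definition fin_supp (M : nmodType) (f : int -> M) : Prop :=
  exists N : nat, forall j : int, (N < `|j|)%N -> f j = 0.

Section Fibre.
Variables (R : realType) (V : gdK_module R).
Local Notation C := R[i].

(* fibre V_s = (+)_{j in K} C v_j, represented by coordinate functions *)
Definition fibre_elt (f : int -> C) : Prop :=
  fin_supp f /\ forall j, ~ Kset V j -> f j = 0.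

Definition fX (s : C) (f : int -> C) : int -> C :=
  fun j => (xco V (j - 2)).[s] * f (j - 2).
Definition fY (s : C) (f : int -> C) : int -> C :=
  fun j => (yco V (j + 2)).[s] * f (j + 2).
Definition fH (f : int -> C) : int -> C := fun j => j%:~R * f j.
(* action of z in K = SO(2,C) ~ C^* : v_j |-> z^j v_j *)
Definition fK (z : C) (f : int -> C) : int -> C := fun j => (z ^ j) * f j.

Definition fibre_submodule (s : C) (W : set (int -> C)) : Prop :=
  (forall f, W f -> fibre_elt f) /\
  W (fun _ => 0) /\
  (forall f g, W f -> W g -> W (fun j => f j + g j)) /\
  (forall (c : C) f, W f -> W (fun j => c * f j)) /\
  (forall f, W f -> W (fX s f)) /\
  (forall f, W f -> W (fY s f)) /\
  (forall f, W f -> W (fH f)) /\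
  (forall z f, z != 0 -> W f -> W (fK z f)).

Definition fibre_irreducible (s : C) : Prop :=
  (exists f, fibre_elt f /\ f <> (fun _ => 0)) /\
  forall W, fibre_submodule s W ->
    W = [set (fun _ => 0)] \/ W = [set f | fibre_elt f].

Definition generically_irreducible : Prop :=
  countable [set s : C | ~ fibre_irreducible s].
End Fibre.

Definition sl2_Ktype_set (K : set int) : Prop :=
  (exists m : nat, (1 <= m)%N /\ K = [set j : int | (m%:Z <= j) && ((j - m%:Z) %% 2 == 0)%Z]) \/
  (exists m : nat, (1 <= m)%N /\ K = [set j : int | (j <= - m%:Z) && ((j + m%:Z) %% 2 == 0)%Z]) \/
  (exists m : nat, K = [set j : int | (- m%:Z <= j <= m%:Z) && ((j + m%:Z) %% 2 == 0)%Z]) \/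
  K = [set j : int | (j %% 2 == 0)%Z] \/
  K = [set j : int | (j %% 2 == 1)%Z].

Section Dirac.
Variables (R : realType) (V : gdK_module R).
Local Notation C := R[i].
Local Notation P := {poly C}.

(* S_d = C[t] 1 (+) C[t] y~ ; column vectors of coordinates in (1, y~) *)
Definition gamma_x : 'M[P]_2 :=
  \matrix_(a < 2, b < 2) if ((a : nat) == 0%N) && ((b : nat) == 1%N) then 4%:R else 0.
Definition gamma_y : 'M[P]_2 :=
  \matrix_(a < 2, b < 2) if ((a : nat) == 1%N) && ((b : nat) == 0%N) then 1 else 0.
Definition h_spin : 'M[P]_2 := (2^-1 : C)%:P *: (gamma_x *m gamma_y) - 1%:M.

(* V (x)_{C[t]} S_d : u j = coordinates of the (v_j (x) -) component *)
Definition VS_elt (u : int -> 'cV[P]_2) : Prop :=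
  fin_supp u /\ forall j, ~ Kset V j -> u j = 0.

Definition tensX (A : 'M[P]_2) (u : int -> 'cV[P]_2) : int -> 'cV[P]_2 :=
  fun j => xco V (j - 2) *: (A *m u (j - 2)).
Definition tensY (A : 'M[P]_2) (u : int -> 'cV[P]_2) : int -> 'cV[P]_2 :=
  fun j => yco V (j + 2) *: (A *m u (j + 2)).

Definition Dirac (u : int -> 'cV[P]_2) : int -> 'cV[P]_2 :=
  fun j => (4^-1 : C)%:P *: (tensX gamma_y u j + tensY gamma_x u j).

Definition hVS (u : int -> 'cV[P]_2) : int -> 'cV[P]_2 :=
  fun j => (j%:~R : C)%:P *: u j + h_spin *m u j.

(* basis vector v_j (x) e_k (k = 0 : e = 1 ; k = 1 : e = y~) *)
Definition vtens (j : int) (k : 'I_2) : int -> 'cV[P]_2 :=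
  fun i => if i == j then delta_mx k 0 else 0.

Definition in_kerD u := VS_elt u /\ Dirac u = (fun _ => 0).
Definition in_imD u := exists w, VS_elt w /\ u = Dirac w.

(* H_{D_d}(V) = ker D / (ker D /\ im D) = 0 *)
Definition DiracCohom_zero : Prop := forall u, in_kerD u -> in_imD u.

(* H_{D_d}(V) is the free C[t]-module on the classes of g_0..g_{n-1}, with
   g_i an h~-weight vector of weight wt i (so the isomorphism with
   C[t]{g_0,...,g_{n-1}} is one of k-modules over C[t]). *)
Definition DiracCohom_free_on (n : nat) (g : 'I_n -> int -> 'cV[P]_2)
    (wt : 'I_n -> int) : Prop :=
  (forall a, in_kerD (g a)) /\
  (forall a, hVS (g a) = fun j => ((wt a)%:~R : C)%:P *: g a j) /\
  (forall u, in_kerD u -> exists (p : 'I_n -> P) w,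
      in_imD w /\ u = fun j => \sum_a p a *: g a j + w j) /\
  (forall p : 'I_n -> P, in_imD (fun j => \sum_a p a *: g a j) ->
      forall a, p a = 0).
End Dirac.

(* Main.v *)
Require Import Defs.
From HB Require Import structures.
From mathcomp Require Import all_boot all_order all_algebra.
From mathcomp Require Import complex.
From mathcomp Require Import boolp classical_sets cardinality reals.
From mathcomp Require Import ereal measure lebesgue_measure.
From mathcomp Require Import zify ring.
Import Order.TTheory GRing.Theory Num.Theory.
Local Open Scope ring_scope.
Local Open Scope classical_set_scope.

Section Unc.
Local Open Scope complex_scope.



Lemma C_uncountable (R : realType) : ~ countable [set: R[i]].
Proof.
move=> /countable_injP [f injf].
have : countable (`[0%R, 1%R]%classic : set R).
  apply/countable_injP; exists (fun r : R => f (r%:C)) => x y _ _ /injf.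
  by rewrite !in_setT => /(_ isT isT) [].
move/countable_lebesgue_measure0; rewrite lebesgue_measure_itv /=.
rewrite lte_fin ltr01 oppr0 adde0; move/eqP; by rewrite eqe oner_eq0.
Qed.

End Unc.


Section S0.
Variables (R : realType) (V : gdK_module R).
Local Notation C := R[i].

Lemma fe0 : fibre_elt V (fun _ : int => 0 : C).
Proof. by split=> // ; exists 0%N. Qed.

Lemma feD f g : fibre_elt V f -> fibre_elt V g -> fibre_elt V (fun j => f j + g j).
Proof.
move=> [[N1 H1] K1] [[N2 H2] K2]; split; last by move=> j nK; rewrite K1 // K2 // addr0.
exists (maxn N1 N2) => j hj; rewrite H1 ?H2 ?addr0 //; lia.
Qed.

Lemma feM (c : int -> C) f : fibre_elt V f -> fibre_elt V (fun j => c j * f j).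
Proof.
move=> [[N1 H1] K1]; split; last by move=> j nK; rewrite K1 // mulr0.
by exists N1 => j hj; rewrite H1 ?mulr0.
Qed.

Lemma feX s f : fibre_elt V f -> fibre_elt V (fX V s f).
Proof.
move=> [[N1 H1] K1]; split.
  exists (N1 + 2)%N => j hj; rewrite /fX H1 ?mulr0 //; lia.
move=> j nK; rewrite /fX; have [/xco_supp [_]|/negPn/eqP ->] := boolP (xco V (j - 2) != 0).
  by rewrite subrK => /nK.
by rewrite horner0 mul0r.
Qed.

Lemma feY s f : fibre_elt V f -> fibre_elt V (fY V s f).
Proof.
move=> [[N1 H1] K1]; split.
  exists (N1 + 2)%N => j hj; rewrite /fY H1 ?mulr0 //; lia.
move=> j nK; rewrite /fY; have [/yco_supp [_]|/negPn/eqP ->] := boolP (yco V (j + 2) != 0).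
  by rewrite addrK => /nK.
by rewrite horner0 mul0r.
Qed.

Definition ind (k : int) : int -> C := fun j => if j == k then 1 else 0.

Lemma fe_ind k : Kset V k -> fibre_elt V (ind k).
Proof.
move=> Kk; split.
  exists `|k|%N => j hj; rewrite /ind; case: eqP => // ejk; subst; lia.
by move=> j nK; rewrite /ind; case: eqP => // ejk; subst.
Qed.


Lemma red_all (W : set (int -> C)) (k b : int) s :
  fibre_submodule V s W -> W (ind k) -> Kset V k -> Kset V b -> ~ W (ind b) ->
  ~ fibre_irreducible V s.
Proof.
move=> sW Wk Kk Kk2 nW [_ /(_ W sW) [E|E]].
  have : W (ind k) by [].
  rewrite E => /= /(congr1 (fun f => f k)); rewrite /ind eqxx => /eqP; by rewrite oner_eq0.
by apply: nW; rewrite E; exact: fe_ind.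
Qed.

Lemma xco_nz_s k s : Kset V k -> Kset V (k + 2) -> xco V k = 0 -> ~ fibre_irreducible V s.
Proof.
move=> Kk Kk2 x0.
pose W := [set f | fibre_elt V f /\ forall n : nat, f (k + 2 + 2 * n%:Z) = 0].
apply: (@red_all W k (k + 2) s) => //.
- split; first by move=> f [].
  split; first by split; [exact: fe0|].
  split; first by move=> f g [F1 F2] [G1 G2]; split; [exact: feD| move=> n; rewrite F2 G2 addr0].
  split; first by move=> c f [F1 F2]; split; [exact: (feM (fun=> c))| move=> n; rewrite F2 mulr0].
  split.
    move=> f [F1 F2]; split; first exact: feX.
    move=> [|n]; rewrite /fX.
      by rewrite mulr0 addr0 addrK x0 horner0 mul0r.
    have -> : k + 2 + 2 * n.+1%:Z - 2 = k + 2 + 2 * n%:Z by lia.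
    by rewrite F2 mulr0.
  split.
    move=> f [F1 F2]; split; first exact: feY.
    move=> n; rewrite /fY.
    have -> : k + 2 + 2 * n%:Z + 2 = k + 2 + 2 * n.+1%:Z by lia.
    by rewrite F2 mulr0.
  split; first by move=> f [F1 F2]; split; [exact: feM| move=> n; rewrite /fH F2 mulr0].
  by move=> z f _ [F1 F2]; split; [exact: feM| move=> n; rewrite /fK F2 mulr0].
- split; first exact: fe_ind.
  by move=> n; rewrite /ind; case: eqP => // e; lia.
- by move=> [_ /(_ 0%N)]; rewrite mulr0 addr0 /ind eqxx => /eqP; rewrite oner_eq0.
Qed.

Lemma yco_nz_s k s : Kset V k -> Kset V (k - 2) -> yco V k = 0 -> ~ fibre_irreducible V s.
Proof.
move=> Kk Kk2 y0.
pose W := [set f | fibre_elt V f /\ forall n : nat, f (k - 2 - 2 * n%:Z) = 0].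
apply: (@red_all W k (k - 2) s) => //.
- split; first by move=> f [].
  split; first by split; [exact: fe0|].
  split; first by move=> f g [F1 F2] [G1 G2]; split; [exact: feD| move=> n; rewrite F2 G2 addr0].
  split; first by move=> c f [F1 F2]; split; [exact: (feM (fun=> c))| move=> n; rewrite F2 mulr0].
  split.
    move=> f [F1 F2]; split; first exact: feX.
    move=> n; rewrite /fX.
    have -> : k - 2 - 2 * n%:Z - 2 = k - 2 - 2 * n.+1%:Z by lia.
    by rewrite F2 mulr0.
  split.
    move=> f [F1 F2]; split; first exact: feY.
    move=> [|n]; rewrite /fY.
      by rewrite mulr0 subr0 subrK y0 horner0 mul0r.
    have -> : k - 2 - 2 * n.+1%:Z + 2 = k - 2 - 2 * n%:Z by lia.
    by rewrite F2 mulr0.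
  split; first by move=> f [F1 F2]; split; [exact: feM| move=> n; rewrite /fH F2 mulr0].
  by move=> z f _ [F1 F2]; split; [exact: feM| move=> n; rewrite /fK F2 mulr0].
- by split; [exact: fe_ind| move=> n; rewrite /ind; case: eqP => // e; lia].
- by move=> [_ /(_ 0%N)]; rewrite mulr0 subr0 /ind eqxx => /eqP; rewrite oner_eq0.
Qed.

End S0.


Section S1.
Variables (R : realType) (V : gdK_module R).
Local Notation C := R[i].
Local Notation P := {poly C}.

Lemma four_inv : (4^-1 : C)%:P * 4%:R = 1 :> P.
Proof. by rewrite -polyC_natr -polyCM mulVf // pnatr_eq0. Qed.

Lemma Dirac0 (u : int -> 'cV[P]_2) j :
  Dirac V u j ord0 ord0 = yco V (j + 2) * u (j + 2) ord_max ord0.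
Proof.
rewrite /Dirac /tensX /tensY !mxE !big_ord_recl !big_ord0 !mxE /=.
have -> : lift ord0 ord0 = ord_max :> 'I_2 by apply: val_inj.
by rewrite !mul0r !addr0 !add0r mulr0 add0r mulrCA [X in _ * X]mulrA four_inv mul1r.
Qed.

Lemma Dirac1 (u : int -> 'cV[P]_2) j :
  Dirac V u j ord_max ord0 = (4^-1 : C)%:P * (xco V (j - 2) * u (j - 2) ord0 ord0).
Proof.
rewrite /Dirac /tensX /tensY !mxE !big_ord_recl !big_ord0 !mxE /=.
by rewrite !mul0r !mul1r !addr0 mulr0 addr0.
Qed.

Lemma cV2_eq (v w : 'cV[P]_2) :
  v ord0 ord0 = w ord0 ord0 -> v ord_max ord0 = w ord_max ord0 -> v = w.
Proof.
move=> e0 e1; apply/matrixP => a b; rewrite ord1.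
case: a => [[|[|//]]] ha.
  by have -> : Ordinal ha = ord0 by apply: val_inj.
by have -> : Ordinal ha = ord_max by apply: val_inj.
Qed.

Lemma hVS0 (u : int -> 'cV[P]_2) j :
  hVS u j ord0 ord0 = ((j + 1)%:~R : C)%:P * u j ord0 ord0.
Proof.
rewrite /hVS /h_spin !mxE !big_ord_recl !big_ord0 !mxE /=.
rewrite !big_ord_recl !big_ord0 !mxE /=.
rewrite !mul0r !add0r !mulr1 !addr0 !mulr0 subrr mul0r addr0.
have h : (2^-1 : C)%:P * 4%:R - 1 = 1 :> P.
  rewrite -polyC_natr -polyCM -polyC1 -polyCB; congr (_%:P).
  by field.
by rewrite h mul1r intrD rmorphD mulrDl /= polyC1 mul1r.
Qed.

Lemma hVS1 (u : int -> 'cV[P]_2) j :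
  hVS u j ord_max ord0 = ((j - 1)%:~R : C)%:P * u j ord_max ord0.
Proof.
rewrite /hVS /h_spin !mxE !big_ord_recl !big_ord0 !mxE /=.
rewrite !big_ord_recl !big_ord0 !mxE /=.
have -> : lift ord0 ord0 = ord_max :> 'I_2 by apply: val_inj.
rewrite intrB rmorphB /= polyC1.
ring.
Qed.

End S1.


Section S2.
Variables (R : realType) (V : gdK_module R).
Local Notation C := R[i].
Local Notation P := {poly C}.

Lemma xco_nz : generically_irreducible V ->
  forall k, Kset V k -> Kset V (k + 2) -> xco V k != 0.
Proof.
move=> gi k Kk Kk2; apply/eqP => x0; apply: (@C_uncountable R).
suff <- : [set s | ~ fibre_irreducible V s] = setT by [].
by apply/seteqP; split => [s _ //|s _]; exact: (@xco_nz_s R V k s Kk Kk2 x0).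
Qed.

Lemma yco_nz : generically_irreducible V ->
  forall k, Kset V k -> Kset V (k - 2) -> yco V k != 0.
Proof.
move=> gi k Kk Kk2; apply/eqP => x0; apply: (@C_uncountable R).
suff <- : [set s | ~ fibre_irreducible V s] = setT by [].
by apply/seteqP; split => [s _ //|s _]; exact: (@yco_nz_s R V k s Kk Kk2 x0).
Qed.

Lemma four_inv_nz : (4^-1 : C)%:P != 0.
Proof. by rewrite polyC_eq0 invr_eq0 pnatr_eq0. Qed.

Lemma ker0 (gi : generically_irreducible V) u k : in_kerD V u -> u k ord0 ord0 != 0 ->
  Kset V k /\ ~ Kset V (k + 2).
Proof.
move=> [[_ Ku] D0] nz.
have Kk : Kset V k by apply: contrapT => nK; move: nz; rewrite (Ku _ nK) mxE eqxx.
split=> // Kk2.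
move: (congr1 (fun f : int -> 'cV[P]_2 => f (k + 2) ord_max ord0) D0) => /=.
rewrite Dirac1 addrK mxE => /eqP; rewrite !mulf_eq0 (negbTE four_inv_nz) /=.
by rewrite (negbTE (xco_nz gi _ Kk Kk2)) (negbTE nz).
Qed.

Lemma ker1 (gi : generically_irreducible V) u k : in_kerD V u -> u k ord_max ord0 != 0 ->
  Kset V k /\ ~ Kset V (k - 2).
Proof.
move=> [[_ Ku] D0] nz.
have Kk : Kset V k by apply: contrapT => nK; move: nz; rewrite (Ku _ nK) mxE eqxx.
split=> // Kk2.
move: (congr1 (fun f : int -> 'cV[P]_2 => f (k - 2) ord0 ord0) D0) => /=.
rewrite Dirac0 subrK mxE => /eqP; rewrite !mulf_eq0.
by rewrite (negbTE (yco_nz gi _ Kk Kk2)) (negbTE nz).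
Qed.

Lemma im0 u j : in_imD V u -> ~ Kset V (j + 2) -> u j ord0 ord0 = 0.
Proof.
move=> [w [_ ->]] nK; rewrite Dirac0.
have [/yco_supp [] //|/negPn/eqP ->] := boolP (yco V (j + 2) != 0).
by rewrite mul0r.
Qed.

Lemma im1 u j : in_imD V u -> ~ Kset V (j - 2) -> u j ord_max ord0 = 0.
Proof.
move=> [w [_ ->]] nK; rewrite Dirac1.
have [/xco_supp [/nK] //|/negPn/eqP ->] := boolP (xco V (j - 2) != 0).
by rewrite mul0r mulr0.
Qed.

Lemma vt_entry j0 (k0 : 'I_2) j b :
  vtens R j0 k0 j b ord0 = ((j == j0) && (b == k0))%:R.
Proof. by rewrite /vtens; case: eqP => _; rewrite !mxE //= andbT. Qed.

Lemma Dirac_zero : Dirac V (fun _ => 0) = fun _ => 0.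
Proof.
apply: funext => j; apply: cV2_eq; rewrite ?Dirac0 ?Dirac1 !mxE.
  by rewrite mulr0.
by rewrite !mulr0.
Qed.

Lemma in_imD0 : in_imD V (fun _ => 0).
Proof. by exists (fun _ => 0); rewrite Dirac_zero; split=> //; split=> //; exists 0%N. Qed.

Lemma VS_vt j0 k0 : Kset V j0 -> VS_elt V (vtens R j0 k0).
Proof.
move=> Kj; split.
  exists `|j0|%N => j hj; rewrite /vtens; case: eqP => // e; subst; lia.
by move=> j nK; rewrite /vtens; case: eqP => // e; subst.
Qed.


Lemma vt_ker0 j0 : Kset V j0 -> ~ Kset V (j0 + 2) -> in_kerD V (vtens R j0 ord0).
Proof.
move=> Kj nK; split; first exact: VS_vt.
apply: funext => j; apply: cV2_eq; rewrite ?Dirac0 ?Dirac1 !vt_entry !mxE.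
  by rewrite andbF mulr0.
case: eqP => [e|_]; last by rewrite mulr0 mulr0.
have [/xco_supp [_ ] //|/negPn/eqP ->] := boolP (xco V (j - 2) != 0).
  by rewrite e.
by rewrite !mul0r mulr0.
Qed.

Lemma vt_ker1 j0 : Kset V j0 -> ~ Kset V (j0 - 2) -> in_kerD V (vtens R j0 ord_max).
Proof.
move=> Kj nK; split; first exact: VS_vt.
apply: funext => j; apply: cV2_eq; rewrite ?Dirac0 ?Dirac1 !vt_entry !mxE.
  case: eqP => [e|_]; last by rewrite mulr0.
  have [/yco_supp [_ ] //|/negPn/eqP ->] := boolP (yco V (j + 2) != 0).
    by rewrite e.
  by rewrite !mul0r.
by rewrite andbF !mulr0.
Qed.

Lemma vt_wt0 j0 : hVS (vtens R j0 ord0) = fun j => ((j0 + 1)%:~R : C)%:P *: vtens R j0 ord0 j.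
Proof.
apply: funext => j; apply: cV2_eq; rewrite ?hVS0 ?hVS1 !mxE !vt_entry.
  by case: eqP => [->|_]; rewrite ?mulr0.
by rewrite andbF !mulr0.
Qed.

Lemma vt_wt1 j0 : hVS (vtens R j0 ord_max) = fun j => ((j0 - 1)%:~R : C)%:P *: vtens R j0 ord_max j.
Proof.
apply: funext => j; apply: cV2_eq; rewrite ?hVS0 ?hVS1 !mxE !vt_entry.
  by rewrite andbF !mulr0.
by case: eqP => [->|_]; rewrite ?mulr0.
Qed.

End S2.


Section S3.
Variables (R : realType) (V : gdK_module R).
Local Notation C := R[i].
Local Notation P := {poly C}.

Lemma case1 (gi : generically_irreducible V) (m : nat) : (1 <= m)%N ->
  Kset V = [set j : int | (m%:Z <= j) && ((j - m%:Z) %% 2 == 0)%Z] ->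
  DiracCohom_free_on V (fun _ : 'I_1 => vtens R m%:Z 1) (fun _ => m%:Z - 1).
Proof.
move=> hm hK.
have Km : Kset V m by rewrite hK /=; lia.
have nKm2 : ~ Kset V (m%:Z - 2) by rewrite hK /=; lia.
have -> : (1 : 'I_2) = ord_max by apply: val_inj.
split; first by move=> a; exact: vt_ker1.
split; first by move=> a; exact: vt_wt1.
split.
  move=> u ku; exists (fun _ => u m%:Z ord_max ord0), (fun _ => 0); split; first exact: in_imD0.
  apply: funext => j; apply: cV2_eq; rewrite mxE summxE big_ord1 !mxE vt_entry.
    have [->|nz] := eqVneq (u j ord0 ord0) 0; first by rewrite andbF mulr0 addr0.
    by have [] := @ker0 R V gi _ _ ku nz; rewrite hK /=; lia.
  have [->|njm] := eqVneq j m%:Z; first by rewrite eqxx mulr1 addr0.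
  rewrite andbC /= mulr0 addr0.
  have [//|nz] := eqVneq (u j ord_max ord0) 0.
  by have [] := @ker1 R V gi _ _ ku nz; rewrite hK /=; lia.
move=> p /(@im1 R V _ m%:Z) H a; move: (H nKm2); rewrite summxE big_ord1 mxE vt_entry !eqxx mulr1.
by rewrite (ord1 a).
Qed.


Lemma case2 (gi : generically_irreducible V) (m : nat) : (1 <= m)%N ->
  Kset V = [set j : int | (j <= - m%:Z) && ((j + m%:Z) %% 2 == 0)%Z] ->
  DiracCohom_free_on V (fun _ : 'I_1 => vtens R (- m%:Z) 0) (fun _ => - m%:Z + 1).
Proof.
move=> hm hK.
have Km : Kset V (- m%:Z) by rewrite hK /=; lia.
have nKm2 : ~ Kset V (- m%:Z + 2) by rewrite hK /=; lia.
have -> : (0 : 'I_2) = ord0 by apply: val_inj.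
split; first by move=> a; exact: vt_ker0.
split; first by move=> a; exact: vt_wt0.
split.
  move=> u ku; exists (fun _ => u (- m%:Z) ord0 ord0), (fun _ => 0); split; first exact: in_imD0.
  apply: funext => j; apply: cV2_eq; rewrite mxE summxE big_ord1 !mxE vt_entry.
    have [->|njm] := eqVneq j (- m%:Z); first by rewrite !eqxx mulr1 addr0.
    rewrite /= mulr0 addr0.
    have [//|nz] := eqVneq (u j ord0 ord0) 0.
    by have [] := @ker0 R V gi _ _ ku nz; rewrite hK /=; lia.
  have [->|nz] := eqVneq (u j ord_max ord0) 0; first by rewrite andbF mulr0 addr0.
  by have [] := @ker1 R V gi _ _ ku nz; rewrite hK /=; lia.
move=> p /(@im0 R V _ (- m%:Z)) H a; move: (H nKm2); rewrite summxE big_ord1 mxE vt_entry !eqxx mulr1.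
by rewrite (ord1 a).
Qed.

Lemma case3 (gi : generically_irreducible V) (m : nat) :
  Kset V = [set j : int | (- m%:Z <= j <= m%:Z) && ((j + m%:Z) %% 2 == 0)%Z] ->
  DiracCohom_free_on V
    (fun a : 'I_2 => if (a : nat) == 0%N then vtens R m%:Z 0 else vtens R (- m%:Z) 1)
    (fun a : 'I_2 => if (a : nat) == 0%N then m%:Z + 1 else - m%:Z - 1).
Proof.
move=> hK.
have Km : Kset V m by rewrite hK /=; lia.
have Kmm : Kset V (- m%:Z) by rewrite hK /=; lia.
have nKm2 : ~ Kset V (m%:Z + 2) by rewrite hK /=; lia.
have nKmm2 : ~ Kset V (- m%:Z - 2) by rewrite hK /=; lia.
have -> : (1 : 'I_2) = ord_max by apply: val_inj.
have -> : (0 : 'I_2) = ord0 by apply: val_inj.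
split.
  by move=> [[|[|//]] ha] /=; [exact: vt_ker0 | exact: vt_ker1].
split.
  by move=> [[|[|//]] ha] /=; [exact: vt_wt0 | exact: vt_wt1].
split.
  move=> u ku; exists (fun a : 'I_2 => if (a : nat) == 0%N then u m%:Z ord0 ord0 else u (- m%:Z) ord_max ord0), (fun _ => 0); split; first exact: in_imD0.
  apply: funext => j; apply: cV2_eq; rewrite mxE summxE !big_ord_recl big_ord0 !mxE /= !vt_entry.
    rewrite andbF mulr0 !addr0 andbT.
    have [->|njm] := eqVneq j m%:Z; first by rewrite mulr1.
    rewrite /= mulr0.
    have [//|nz] := eqVneq (u j ord0 ord0) 0.
    by have [] := @ker0 R V gi _ _ ku nz; rewrite hK /=; lia.
  rewrite andbF mulr0 add0r addr0.
  have [->|njm] := eqVneq j (- m%:Z).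
    by rewrite /= mulr1 addr0.
  rewrite /= mulr0n mulr0 addr0.
  have [//|nz] := eqVneq (u j ord_max ord0) 0.
  by have [] := @ker1 R V gi _ _ ku nz; rewrite hK /=; lia.
move=> p Ip.
have H0 := @im0 R V _ m%:Z Ip nKm2.
have H1 := @im1 R V _ (- m%:Z) Ip nKmm2.
move: H0 H1; rewrite !summxE !big_ord_recl !big_ord0 !mxE /= !vt_entry.
have f1 : (ord0 == ord_max :> 'I_2) = false by [].
have f2 : (ord_max == ord0 :> 'I_2) = false by [].
rewrite !eqxx /= f1 f2 !andbF !mulr0n !mulr0 !addr0 add0r !mulr1 => e0 e1.
move=> [[|[|//]] ha].
  by rewrite (_ : Ordinal ha = ord0) //; apply: val_inj.
by rewrite (_ : Ordinal ha = lift ord0 ord0) //; apply: val_inj.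
Qed.


Lemma iffpart (gi : generically_irreducible V) : sl2_Ktype_set (Kset V) ->
  (DiracCohom_zero V <->
     (Kset V = [set j : int | (j %% 2 == 0)%Z] \/
      Kset V = [set j : int | (j %% 2 == 1)%Z])).
Proof.
move=> hK0; split.
  move=> Z.
  case: hK0 => [[m [hm hK]]|[[m [hm hK]]|[[m hK]|[hK|hK]]]]; [| | | by left | by right].
  - have Km : Kset V m by rewrite hK /=; lia.
    have nKm2 : ~ Kset V (m%:Z - 2) by rewrite hK /=; lia.
    have := @im1 R V _ m%:Z (Z _ (@vt_ker1 R V _ Km nKm2)) nKm2.
    rewrite vt_entry !eqxx /= => /eqP; rewrite oner_eq0.
    done.
  - have Km : Kset V (- m%:Z) by rewrite hK /=; lia.
    have nKm2 : ~ Kset V (- m%:Z + 2) by rewrite hK /=; lia.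
    have := @im0 R V _ (- m%:Z) (Z _ (@vt_ker0 R V _ Km nKm2)) nKm2.
    rewrite vt_entry !eqxx /= => /eqP; rewrite oner_eq0.
    done.
  - have Km : Kset V m by rewrite hK /=; lia.
    have nKm2 : ~ Kset V (m%:Z + 2) by rewrite hK /=; lia.
    have := @im0 R V _ m%:Z (Z _ (@vt_ker0 R V _ Km nKm2)) nKm2.
    rewrite vt_entry !eqxx /= => /eqP; rewrite oner_eq0.
    done.
move=> hK u ku.
suff -> : u = fun _ => 0 by exact: in_imD0.
apply: funext => j; apply: cV2_eq; rewrite mxE.
  have [//|nz] := eqVneq (u j ord0 ord0) 0.
  by have [] := @ker0 R V gi _ _ ku nz; case: hK => -> /=; lia.
have [//|nz] := eqVneq (u j ord_max ord0) 0.
by have [] := @ker1 R V gi _ _ ku nz; case: hK => -> /=; lia.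
Qed.

End S3.

Theorem mainTheorem15 (R : realType) (V : gdK_module R) :
  generically_irreducible V ->
  sl2_Ktype_set (Kset V) ->
  (DiracCohom_zero V <->
     (Kset V = [set j : int | (j %% 2 == 0)%Z] \/
      Kset V = [set j : int | (j %% 2 == 1)%Z])) /\
  (forall m : nat, (1 <= m)%N ->
     Kset V = [set j : int | (m%:Z <= j) && ((j - m%:Z) %% 2 == 0)%Z] ->
     DiracCohom_free_on V (fun _ : 'I_1 => vtens R m%:Z 1)
                          (fun _ => m%:Z - 1)) /\
  (forall m : nat, (1 <= m)%N ->
     Kset V = [set j : int | (j <= - m%:Z) && ((j + m%:Z) %% 2 == 0)%Z] ->
     DiracCohom_free_on V (fun _ : 'I_1 => vtens R (- m%:Z) 0)
                          (fun _ => - m%:Z + 1)) /\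
  (forall m : nat,
     Kset V = [set j : int | (- m%:Z <= j <= m%:Z) && ((j + m%:Z) %% 2 == 0)%Z] ->
     DiracCohom_free_on V
       (fun a : 'I_2 => if (a : nat) == 0%N then vtens R m%:Z 0 else vtens R (- m%:Z) 1)
       (fun a : 'I_2 => if (a : nat) == 0%N then m%:Z + 1 else - m%:Z - 1)).
Proof.
move=> gi hK0; split; first exact: iffpart.
split; first by move=> m; exact: case1.
split; first by move=> m; exact: case2.
by move=> m; exact: case3.
Qed.
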